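(* Let $p$ be a prime and $m\ge1$. Suppose $\underline{x}=(x_{1},\dots,x_{m})$ and $\underline{y}=(y_{1},\dots,y_{m})$ are elements of $SU(p)^{m}$ with $\underline{c}:=[\underline{x},\underline{y}]=(c,\dots,c)\in\Delta(\mathbb{Z}/p)$ for some $c\in Z(SU(p))$, $c\ne 1$. Let $\underline{z}\in SU(p)^{m}$ satisfy $[\underline{x},\underline{z}],[\underline{y},\underline{z}]\in\Delta(\mathbb{Z}/p)$, and write $[\underline{x},\underline{z}]=\underline{c}^{b}$ and $[\underline{y},\underline{z}]=\underline{c}^{a}$ with integers $0\le a,b<p$. Then there is $\underline{w}=(w_{1},\dots,w_{m})\in Z(SU(p)^{m})$ such that $\underline{z}=\underline{w}\,\underline{x}^{-a}\underline{y}^{b}$, i.e. $z_{i}=w_{i}x_{i}^{-a}y_{i}^{b}$ for all $i$.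
   Context: $Z(SU(p))\cong\mathbb{Z}/p$ is the center of $SU(p)$, and $\Delta(\mathbb{Z}/p)=\{(c,\dots,c): c\in Z(SU(p))\}\subset Z(SU(p)^m)$. The commutator is $[u,v]=uvu^{-1}v^{-1}$. *)

(* Defs.v *)
From HB Require Import structures.
From mathcomp Require Import all_boot all_order all_algebra.
From mathcomp Require Import complex.
From mathcomp Require Import reals.
Set Implicit Arguments. Unset Strict Implicit. Unset Printing Implicit Defensive.
Import Order.TTheory GRing.Theory Num.Theory.
Local Open Scope ring_scope.

Definition adjmx (C : numClosedFieldType) n (A : 'M[C]_n) : 'M[C]_n :=
  (map_mx Num.conj A)^T.

Definition inSU (C : numClosedFieldType) n (A : 'M[C]_n) : Prop :=
  A *m adjmx A = 1%:M /\ \det A = 1.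

Definition inZSU (C : numClosedFieldType) n (A : 'M[C]_n) : Prop :=
  inSU A /\ forall B : 'M[C]_n, inSU B -> A *m B = B *m A.

Definition commx (C : numClosedFieldType) n (u v : 'M[C]_n) : 'M[C]_n :=
  u *m v *m invmx u *m invmx v.

(* Main.v *)
Require Import Defs.
From HB Require Import structures.
From mathcomp Require Import all_boot all_order all_algebra all_fingroup.
From mathcomp Require Import complex.
From mathcomp Require Import reals.
Import Order.TTheory GRing.Theory Num.Theory.
Local Open Scope ring_scope.
Set Implicit Arguments. Unset Strict Implicit. Unset Printing Implicit Defensive.

Section Lin.
Variables (C : numClosedFieldType) (n : nat) (B : 'I_n -> 'I_n -> 'M[C]_n).
Definition fB (al : 'M[C]_n) : 'M[C]_n := \sum_i \sum_j al i j *: B i j.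
Fact fB_lin : linear fB.
Proof.
move=> a u v; rewrite /fB scaler_sumr -big_split; apply: eq_bigr => i _.
rewrite scaler_sumr -big_split; apply: eq_bigr => j _.
by rewrite !mxE scalerDl scalerA.
Qed.
HB.instance Definition _ := GRing.isLinear.Build C 'M[C]_n 'M[C]_n _ fB fB_lin.
Lemma fBlin u : u *m lin_mx fB = mxvec (fB (vec_mx u)).
Proof. exact: mul_rV_lin. Qed.
End Lin.

Lemma fB_surj (C : numClosedFieldType) n (B : 'I_n -> 'I_n -> 'M[C]_n) :
  (forall al, fB B al = 0 -> al = 0) -> forall M, exists al, fB B al = M.
Proof.
move=> inj M.
set L := lin_mx (fB B).
have uL : L \in unitmx.
  rewrite -row_free_unit -kermx_eq0; apply/eqP/row_matrixP => r.
  rewrite row0; apply: (can_inj vec_mxK); rewrite linear0.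
  apply: inj; apply: (can_inj mxvecK); rewrite -fBlin linear0 -row_mul.
  by rewrite mulmx_ker row0.
exists (vec_mx (mxvec M *m invmx L)); apply: (can_inj mxvecK).
by rewrite -fBlin mulmxKV.
Qed.

Section Core.
Variables (C : numClosedFieldType) (n : nat).
Local Notation M := 'M[C]_n.+1.

Lemma tr_conj (u A : M) : u \is a GRing.unit -> \tr (u * A * u^-1) = \tr A.
Proof. by move=> uu; rewrite -!mulmxE mxtrace_mulC !mulmxE mulKr. Qed.

Lemma conj_powz (u g : M) (E : int) : u \is a GRing.unit -> g \is a GRing.unit ->
  u * g ^ E * u^-1 = (u * g * u^-1) ^ E.
Proof.
move=> uu ug.
have hn k : u * g ^+ k * u^-1 = (u * g * u^-1) ^+ k.
  elim: k => [|k IH]; first by rewrite !expr0 mulr1 mulrV.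
  by rewrite [RHS]exprS -IH !mulrA divrK // exprS !mulrA.
case: E => k /=; first exact: hn.
change (u * (g ^+ k.+1)^-1 * u^-1 = ((u * g / u) ^+ k.+1)^-1).
by rewrite -hn !invrM ?unitrX ?unitrV ?unitrMr ?unitrX // invrK mulrA.
Qed.

Lemma conj_scal (u g : M) (s : C) (E : int) : u \is a GRing.unit -> g \is a GRing.unit ->
  s != 0 -> u * g * u^-1 = s%:M * g -> u * g ^ E * u^-1 = (s ^ E)%:M * g ^ E.
Proof.
move=> uu ug s0 h; rewrite conj_powz // h exprMz_comm //.
- by rewrite -rmorphXz // unitfE.
- by rewrite unitmxE det_scalar unitfE expf_neq0.
- by rewrite /GRing.comm -mulmxE scalar_mxC.
Qed.


Lemma tr_vanish (x y : M) (z : C) (D E : int) :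
  x \is a GRing.unit -> y \is a GRing.unit -> z != 0 ->
  x * y * x^-1 * y^-1 = z%:M ->
  (z ^ D != 1) || (z ^ E != 1) -> \tr (x ^ D * y ^ E) = 0.
Proof.
move=> ux uy z0 hxy hne.
have R1 : x * y * x^-1 = z%:M * y by rewrite -hxy divrK.
have R2 : y * x * y^-1 = (z^-1)%:M * x.
  have uz : (z%:M : M) \is a GRing.unit by rewrite unitmxE det_scalar unitfE expf_neq0.
  have -> : (z^-1)%:M = (z%:M : M)^-1 by rewrite rmorphV // unitfE.
  apply: (mulrI uz); rewrite [RHS]mulrA mulrV // mul1r !mulrA -R1.
  by rewrite divrK // mulrK.
have key (a : C) (A : M) : \tr A = \tr (a%:M * A) -> a != 1 -> \tr A = 0.
  move=> hA a1; have : \tr A = a * \tr A by rewrite {1}hA -mulmxE mul_scalar_mx mxtraceZ.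
  move/eqP; rewrite -subr_eq0 -{1}[\tr A]mul1r -mulrBl mulf_eq0 subr_eq0 eq_sym.
  by rewrite (negbTE a1) /= => /eqP.
have cyy : GRing.comm (y^-1) (y ^ E).
  exact: commrXz (commr_sym (commrV (commr_refl y))).
have cxx : GRing.comm x (x ^ D) by exact: commrXz (commr_refl x).
case/orP: hne => hne.
- apply: (key ((z^-1) ^ D)); last by rewrite exprz_inv -invr_expz invr_eq1.
  rewrite -[in LHS](tr_conj _ uy); congr (\tr _).
  rewrite [RHS]mulrA -(conj_scal D uy ux _ R2) ?invr_eq0 //.
  by rewrite !mulrA -[_ * y ^ E / y]mulrA -cyy mulrA.
- apply: (key (z ^ E)) => //.
  rewrite -[in LHS](tr_conj _ ux); congr (\tr _).
  rewrite !mulrA cxx -!mulrA (mulrA x) (conj_scal E ux uy z0 R1).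
  by rewrite !mulrA -mulmxE scalar_mxC.
Qed.

Lemma zneq (z : C) (hprim : forall k, (0 < k < n.+1)%N -> z ^+ k != 1)
  (i k : 'I_n.+1) : i != k -> z ^ (i%:Z - k%:Z) != 1.
Proof.
move=> ik; case: (ltngtP i k) => h.
- rewrite -opprB -invr_expz invr_eq1 subzn ?(ltnW h) //; apply: hprim.
  by rewrite subn_gt0 h /= (leq_ltn_trans (leq_subr i k) (ltn_ord k)).
- rewrite subzn ?(ltnW h) //; apply: hprim.
  by rewrite subn_gt0 h /= (leq_ltn_trans (leq_subr k i) (ltn_ord i)).
- by move: ik; rewrite (val_inj h) eqxx.
Qed.

Lemma pair_tr (x y : M) (z : C) (i j k l : 'I_n.+1) :
  x \is a GRing.unit -> y \is a GRing.unit -> z != 0 ->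
  x * y * x^-1 * y^-1 = z%:M ->
  (forall k, (0 < k < n.+1)%N -> z ^+ k != 1) ->
  \tr ((x ^+ k * y ^+ l)^-1 * (x ^+ i * y ^+ j)) =
  if (i == k) && (j == l) then (n.+1)%:R else 0.
Proof.
move=> ux uy z0 hxy hprim.
have -> : (x ^+ k * y ^+ l)^-1 * (x ^+ i * y ^+ j) =
   (y ^+ l)^-1 * (x ^ (i%:Z - k%:Z) * y ^+ j).
  rewrite invrM ?unitrX // -mulrA; congr (_ * _).
  by rewrite addrC exprzDr // -invr_expz mulrA.
rewrite -mulmxE mxtrace_mulC mulmxE -mulrA.
have -> : y ^+ j * (y ^+ l)^-1 = y ^ (j%:Z - l%:Z).
  by rewrite exprzDr // -invr_expz.
case: ifP => [/andP[/eqP -> /eqP ->]|h].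
  by rewrite !subrr !expr0z mulr1 mxtrace1.
apply: (tr_vanish ux uy z0 hxy).
case: (boolP (i == k)) h => /= [_ jl|ik _]; last by rewrite zneq.
by rewrite orbC zneq // jl.
Qed.

Lemma schur (x y w : M) (z : C) :
  x \is a GRing.unit -> y \is a GRing.unit -> z != 0 ->
  x * y * x^-1 * y^-1 = z%:M ->
  (forall k, (0 < k < n.+1)%N -> z ^+ k != 1) ->
  w * x = x * w -> w * y = y * w -> forall A : M, w * A = A * w.
Proof.
move=> ux uy z0 hxy hprim wx wy A.
pose B := fun (i j : 'I_n.+1) => x ^+ i * y ^+ j.
have ind : forall al, fB B al = 0 -> al = 0.
  move=> al h; apply/matrixP => k l; rewrite mxE.
  have : \tr ((x ^+ k * y ^+ l)^-1 * fB B al) = 0 by rewrite h mulr0 linear0.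
  have term i j : \tr ((x ^+ k * y ^+ l)^-1 * (al i j *: B i j)) =
     al i j * (if (i == k) && (j == l) then (n.+1)%:R else 0).
    by rewrite -scalerAr linearZ /= (pair_tr _ _ _ _ ux uy z0 hxy hprim).
  rewrite /fB mulr_sumr linear_sum.
  under eq_bigr => i _ do rewrite mulr_sumr linear_sum (eq_bigr _ (fun j _ => term i j)).
  rewrite (bigD1 k) //= [X in _ + X]big1 => [|i ik]; last first.
    by rewrite big1 // => j _; rewrite (negbTE ik) mulr0.
  rewrite addr0 (bigD1 l) //= [X in _ + X]big1 => [|j jl]; last first.
    by rewrite (negbTE jl) andbF mulr0.
  rewrite addr0 !eqxx /= => /eqP.
  by rewrite mulf_eq0 pnatr_eq0 orbF => /eqP.
have [al <-] := fB_surj ind A.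
have cB i j : GRing.comm w (B i j) by apply: commrM; apply: commrX.
rewrite /fB; apply: commr_sum => i _; apply: commr_sum => j _.
by rewrite /GRing.comm -scalerAr -scalerAl cB.
Qed.

Lemma conjM (u A B : M) : u \is a GRing.unit ->
  u * (A * B) * u^-1 = (u * A * u^-1) * (u * B * u^-1).
Proof. by move=> uu; rewrite !mulrA divrK. Qed.

Lemma conj_self (u : M) (E : int) : u \is a GRing.unit -> u * u ^ E * u^-1 = u ^ E.
Proof. by move=> uu; rewrite (commrXz _ (commr_refl u)) mulrK. Qed.

Lemma comm_conj (u v s : M) : v \is a GRing.unit -> u * v * u^-1 * v^-1 = s ->
  u * v * u^-1 = s * v.
Proof. by move=> uv h; rewrite -h divrK. Qed.

Lemma conj_rev (x y : M) (z : C) :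
  x \is a GRing.unit -> y \is a GRing.unit -> z != 0 ->
  x * y * x^-1 * y^-1 = z%:M -> y * x * y^-1 = (z^-1)%:M * x.
Proof.
move=> ux uy z0 hxy.
have R1 : x * y * x^-1 = z%:M * y by rewrite -hxy divrK.
have uz : (z%:M : M) \is a GRing.unit by rewrite unitmxE det_scalar unitfE expf_neq0.
have -> : (z^-1)%:M = (z%:M : M)^-1 by rewrite rmorphV // unitfE.
apply: (mulrI uz); rewrite [RHS]mulrA mulrV // mul1r !mulrA -R1.
by rewrite divrK // mulrK.
Qed.

Lemma scC (a : C) (A : M) : A * a%:M = a%:M * A.
Proof. by rewrite -mulmxE scalar_mxC. Qed.

Lemma adjmxM (A B : M) : adjmx (A *m B) = adjmx B *m adjmx A.
Proof. by rewrite /adjmx map_mxM trmx_mul. Qed.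

Lemma adjmxK (A : M) : adjmx (adjmx A) = A.
Proof. by apply/matrixP => i j; rewrite !mxE conjCK. Qed.

Lemma su_unit (A : M) : inSU A -> A \is a GRing.unit.
Proof. by case=> _ hd; rewrite unitmxE hd unitr1. Qed.

Lemma su_invE (A : M) : inSU A -> A^-1 = adjmx A.
Proof.
move=> hA; have uA := su_unit hA; case: hA => h _.
by rewrite -[A^-1]mulr1 -[1]/(1%:M : M) -h mulmxE mulrA mulVr // mul1r.
Qed.

Lemma su_inv (A : M) : inSU A -> inSU (A^-1).
Proof.
move=> hA; split; last by rewrite detV hA.2 invr1.
rewrite su_invE // adjmxK; apply: mulmx1C; exact: hA.1.
Qed.

Lemma su_mul (A B : M) : inSU A -> inSU B -> inSU (A * B).
Proof.
move=> hA hB; split; last by rewrite -mulmxE det_mulmx hA.2 hB.2 mulr1.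
by rewrite -mulmxE adjmxM mulmxA -(mulmxA A) hB.1 mulmx1 hA.1.
Qed.

Lemma su_one : inSU (1 : M).
Proof.
split; last exact: det1.
by rewrite /adjmx map_mx1 trmx1 mulmx1.
Qed.

Lemma su_powz (A : M) (E : int) : inSU A -> inSU (A ^ E).
Proof.
move=> hA.
have hn k : inSU (A ^+ k).
  by elim: k => [|k IH]; [rewrite expr0; exact: su_one | rewrite exprS; exact: su_mul].
case: E => k /=; first exact: hn.
exact: su_inv.
Qed.

Lemma sc_one (a : C) (A : M) : a = 1 -> a%:M * A = A.
Proof. by move=> ->; rewrite -mulmxE mul1mx. Qed.

Lemma juggle1 (s1 s2 : C) (A B D : M) : s1 * s2 = 1 ->
  (s1%:M * A) * (s2%:M * B) * D = A * B * D.
Proof.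
move=> h; rewrite -!mulrA (mulrA A) scC -mulrA mulrA -mulmxE -scalar_mxM mulmxE.
by rewrite sc_one.
Qed.

Lemma juggle2 (s1 s2 : C) (A B D : M) : s1 * s2 = 1 ->
  (s1%:M * A) * B * (s2%:M * D) = A * B * D.
Proof.
move=> h; rewrite -!mulrA (mulrA B) scC -mulrA (mulrA A) scC -mulrA mulrA.
by rewrite -mulmxE -scalar_mxM mulmxE sc_one.
Qed.

Lemma diag_unitary (d : 'rV[C]_n.+1) : (forall i, d 0 i * (d 0 i)^* = 1) ->
  diag_mx d *m adjmx (diag_mx d) = 1%:M.
Proof.
move=> hd; apply/matrixP => i j.
rewrite mul_diag_mx !mxE; case: (eqVneq i j) => [->|ij].
  by rewrite !mulr1n hd.
by rewrite !mulr0n rmorph0 mulr0.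
Qed.

Lemma perm_unitary (s : 'S_n.+1) : perm_mx s *m adjmx (perm_mx s) = (1%:M : M).
Proof.
by rewrite /adjmx map_perm_mx tr_perm_mx -perm_mxM mulgV perm_mx1.
Qed.

Lemma center_scalar (c : M) : (forall B, inSU B -> c *m B = B *m c) ->
  c = (c ord0 ord0)%:M.
Proof.
move=> hc.
have off k l : k != l -> c k l = 0.
  move=> kl; pose d : 'rV[C]_n.+1 := \row_m (if m == k then 'i else if m == l then -'i else 1).
  have hD : inSU (diag_mx d).
    split.
      apply: diag_unitary => i; rewrite !mxE.
      case: ifP => _; first by rewrite conjCi mulrN mulCii opprK.
      have ci : (- 'i : C)^* = 'i by rewrite -conjCi conjCK.
      case: ifP => _; first by rewrite ci mulNr mulCii opprK.
      by rewrite rmorph1 mulr1.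
    rewrite det_diag (bigD1 k) //= (bigD1 l) /=; last by rewrite eq_sym.
    rewrite big1 => [|m /andP[mk ml]]; last by rewrite mxE (negbTE mk) (negbTE ml).
    by rewrite !mxE eqxx eq_sym (negbTE kl) eqxx mulr1 mulrN mulCii opprK.
  have := hc _ hD => /matrixP /(_ k l).
  rewrite mul_diag_mx mul_mx_diag !mxE eqxx eq_sym (negbTE kl) eqxx => h.
  have : ('i *+ 2) * c k l = 0.
    by rewrite mulr2n mulrDl -{1}h mulrN [c k l * _]mulrC addNr.
  by move/eqP; rewrite mulf_eq0 mulrn_eq0 /= (negbTE (neq0Ci C)) => /eqP.
have cd : c = diag_mx (\row_m c m m).
  apply/matrixP => i j; rewrite !mxE; case: (eqVneq i j) => [->|ij].
    by rewrite mulr1n.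
  by rewrite mulr0n off.
have dg k l : k != l -> c k k = c l l.
  move=> kl; pose e : 'rV[C]_n.+1 := \row_m (if m == k then -1 else 1).
  pose S := diag_mx e *m perm_mx (tperm k l).
  have hS : inSU S.
    split.
      rewrite /S adjmxM mulmxA -(mulmxA (diag_mx e)) perm_unitary mulmx1.
      apply: diag_unitary => i; rewrite !mxE.
      by case: ifP => _; rewrite ?rmorphN rmorph1 ?mulrNN mulr1.
    rewrite det_mulmx det_perm odd_tperm kl det_diag (bigD1 k) //= big1.
      by rewrite mxE eqxx mulr1 expr1 mulrNN mulr1.
    by move=> m mk; rewrite mxE (negbTE mk).
  have := hc _ hS => /matrixP /(_ k l).
  rewrite {1}cd {2}cd /S mul_diag_mx mul_mx_diag mul_diag_mx !mxE !eqxx tpermL eqxx.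
  by rewrite mulr1 mulrN1 mulN1r => /oppr_inj.
apply/matrixP => i j; rewrite !mxE; case: (eqVneq i j) => [<-|ij].
  rewrite mulr1n; case: (eqVneq i ord0) => [->//|i0].
  by apply: dg.
by rewrite mulr0n off.
Qed.


End Core.

Lemma prim_of (C : numClosedFieldType) (z : C) p : prime p -> z ^+ p = 1 -> z != 1 ->
  forall k, (0 < k < p)%N -> z ^+ k != 1.
Proof.
move=> pp zp z1 k /andP[k0 kp].
have [m pm mp] := prim_order_exists (prime_gt0 pp) zp.
case/primeP: pp => _ /(_ m mp) /orP[/eqP m1|/eqP mE].
  by move: (prim_expr_order pm); rewrite m1 expr1 => /eqP; rewrite (negbTE z1).
rewrite -(prim_order_dvd pm) mE; apply/negP => /(dvdn_leq k0).
by rewrite leqNgt kp.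
Qed.

Lemma commxE (C : numClosedFieldType) n (u v : 'M[C]_n.+1) :
  commx u v = u * v * u^-1 * v^-1.
Proof. by rewrite /commx !mulmxE. Qed.

Theorem lemma3p3 (R : realType) (p m : nat) (hp : prime p) (hm : (1 <= m)%N)
  (x y z : 'I_m -> 'M[R[i]]_p) (c : 'M[R[i]]_p) (a b : nat)
  (hx : forall k, inSU (x k)) (hy : forall k, inSU (y k))
  (hz : forall k, inSU (z k))
  (hc : inZSU c) (hc1 : c != 1%:M)
  (hxy : forall k, commx (x k) (y k) = c)
  (ha : (a < p)%N) (hb : (b < p)%N)
  (hxz : forall k, commx (x k) (z k) = c ^+ b)
  (hyz : forall k, commx (y k) (z k) = c ^+ a) :
  exists w : 'I_m -> 'M[R[i]]_p,
    (forall k, inZSU (w k)) /\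
    (forall k, z k = w k *m invmx (x k ^+ a) *m (y k ^+ b)).
Proof.
case: p hp x y z c hx hy hz hc hc1 hxy ha hb hxz hyz => [//|n] hp x y z c hx hy hz hc hc1 hxy ha hb hxz hyz.
set C := R[i].
have cE := center_scalar hc.2.
set zeta := c ord0 ord0 in cE.
have zp : zeta ^+ n.+1 = 1 by rewrite -det_scalar -cE hc.1.2.
have z1 : zeta != 1 by apply: contraNneq hc1 => e; rewrite cE e.
have z0 : zeta != 0 by apply: contra_eq_neq zp => ->; rewrite expr0n /= eq_sym oner_eq0.
have prim := prim_of hp zp z1.
exists (fun k => z k * y k ^ (- (b : int)) * x k ^+ a); split => k; last first.
  have ux := su_unit (hx k); have uy := su_unit (hy k).
  rewrite !mulmxE -[invmx _]/((x k ^+ a)^-1) mulrK ?unitrX // -invr_expz.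
  by rewrite divrK ?unitrX.
have ux := su_unit (hx k); have uy := su_unit (hy k); have uz := su_unit (hz k).
have hxy' : x k * y k * (x k)^-1 * (y k)^-1 = zeta%:M by rewrite -commxE hxy cE.
have hxz' : x k * z k * (x k)^-1 * (z k)^-1 = (zeta ^+ b)%:M by rewrite -commxE hxz cE rmorphXn.
have hyz' : y k * z k * (y k)^-1 * (z k)^-1 = (zeta ^+ a)%:M by rewrite -commxE hyz cE rmorphXn.
have R1 := comm_conj uy hxy'.
have R2 := conj_rev ux uy z0 hxy'.
set W := z k * y k ^ (- (b : int)) * x k ^+ a.
have wx : W * x k = x k * W.
  suff e : x k * W * (x k)^-1 = W by rewrite -{1}e divrK.
  rewrite /W conjM // conjM // (comm_conj uz hxz') (conj_scal _ ux uy z0 R1).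
  rewrite (conj_self a ux) juggle1 //.
  by rewrite -invr_expz divff // expf_neq0.
have wy : W * y k = y k * W.
  suff e : y k * W * (y k)^-1 = W by rewrite -{1}e divrK.
  rewrite /W conjM // conjM // (comm_conj uz hyz') (conj_self _ uy).
  rewrite (conj_scal a uy ux _ R2) ?invr_eq0 // juggle2 //.
  by rewrite exprz_inv -invr_expz divff // expf_neq0.
split.
  apply: su_mul; first by apply: su_mul; [exact: hz | exact: su_powz].
  exact: (su_powz a (hx k)).
move=> B _; rewrite mulmxE.
exact: (schur ux uy z0 hxy' prim wx wy).
Qed.
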